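(* Let $\tau=\tfrac12(1+\sqrt5)$ and $\sigma=\tfrac12(1-\sqrt5)$, and consider the five pairs $(X^{\mathrm{aff}},H_m)\in\{(E_8^=,H_4),(D_6^=,H_3),(D_6^<,H_3),(D_6^>,H_3),(A_4^=,H_2)\}$, with the crystallographic space $V_n$ (where $n=8,6,6,6,4$ respectively), affine root $\alpha_0\in V_n$, projections $\pi_\parallel,\pi_\perp$ and vectors $a_i,\bar a_i$ as described in the context. Put $a_0:=\pi_\parallel(\alpha_0)$ and let $\hat A$ be the $(m+1)\times(m+1)$ matrix $\hat A_{ij}=2\frac{(a_i\mid a_j)}{(a_i\mid a_i)}$, $0\le i,j\le m$ (the induced Cartan matrix). Then in each of the five cases: $a_0\neq 0$; $\hat A_{ii}=2$; every off-diagonal entry of $\hat A$ is a non-positive element of $\mathbb{Q}[\tau]=\{p+q\tau: p,q\in\mathbb{Q}\}$ (and lies in $\mathbb{Z}[\tau]=\{p+q\tau:p,q\in\mathbb{Z}\}$ in the three cases $E_8^=,D_6^=,A_4^=$); $\hat A_{ij}=0$ if and only if $\hat A_{ji}=0$; and $\det\hat A=0$. Thus $\hat A$ is an affine extension of the Cartan matrix of $H_m$ (its lower right $m\times m$ block). Moreover, if $\bar a_0:=\pi_\perp(\alpha_0)$ and $\bar{\hat A}_{ij}=2\frac{(\bar a_i\mid \bar a_j)}{(\bar a_i\mid \bar a_i)}$, then the coefficients of $\bar a_0$ in the basis $\bar a_1,\dots,\bar a_m$ are the Galois conjugates of the coefficients of $a_0$ in the basis $a_1,\dots,a_m$, and $\bar{\hat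 A}$ is the entrywise Galois conjugate of $\hat A$.
   Context: Galois conjugation on $\mathbb{Q}[\tau]$ is the field automorphism $x\mapsto\bar x$ exchanging $\tau$ and $\sigma$ (note $\tau^2=\tau+1$, $\sigma^2=\sigma+1$). Non-crystallographic side ($m\in\{2,3,4\}$): $a_1,\dots,a_m$ are vectors in Euclidean space $\mathbb{R}^m$ with inner product $(\cdot\mid\cdot)$, all with $(a_i\mid a_i)=1$ and with the following other inner products (all unlisted ones are $0$). $H_4$: $(a_1\mid a_2)=(a_2\mid a_3)=-\tfrac12$, $(a_3\mid a_4)=-\tfrac{\tau}{2}$. $H_3$: $(a_1\mid a_2)=-\tfrac12$, $(a_2\mid a_3)=-\tfrac{\tau}{2}$. $H_2$: $(a_1\mid a_2)=-\tfrac{\tau}{2}$. (These are simple roots of the standard representations of $H_4,H_3,H_2$; e.g. for $H_4$ one may take $a_1=\frac12(-\sigma,-\tau,0,-1)$, $a_2=\frac12(0,-\sigma,-\tau,1)$, $a_3=\frac12(0,1,-\sigma,-\tau)$, $a_4=\frac12(0,-1,-\sigma,\tau)$.) The vectors $\bar a_1,\dots,\bar a_m$ are defined in the same way but with every $\tau$ in these inner products replaced by $\sigma$ (simple roots of the non-standard representation). Crystallographic side: $V_n$ is a real vector space with basis $\alpha_1,\dots,\alpha_n$ (simple roots). The Dynkin diagrams are labelled as follows: $A_4$: chain $\alpha_1-\alpha_2-\alpha_3-\alpha_4$; $D_6$: chain $\alpha_1-\alpha_2-\alpha_3-\alpha_4-\alpha_5$ with $\alpha_6$ joined to $\alpha_4$;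 $E_8$: chain $\alpha_1-\cdots-\alpha_7$ with $\alpha_8$ joined to $\alpha_5$. The affine roots are the elements of $V_n$ given by: $E_8^=$: $-\alpha_0=2\alpha_1+3\alpha_2+4\alpha_3+5\alpha_4+6\alpha_5+4\alpha_6+2\alpha_7+3\alpha_8$; $D_6^=$: $-\alpha_0=\alpha_1+2\alpha_2+2\alpha_3+2\alpha_4+\alpha_5+\alpha_6$; $D_6^<$: $-\alpha_0=\alpha_1+\alpha_2+\alpha_3+\alpha_4+\tfrac12\alpha_5+\tfrac12\alpha_6$; $D_6^>$: $-\alpha_0=2\alpha_1+2\alpha_2+2\alpha_3+2\alpha_4+\alpha_5+\alpha_6$; $A_4^=$: $-\alpha_0=\alpha_1+\alpha_2+\alpha_3+\alpha_4$. Projections: $\pi_\parallel:V_n\to\mathbb{R}^m$ is the linear map given on the basis by: for $E_8\to H_4$: $\alpha_1\mapsto a_1$, $\alpha_2\mapsto a_2$, $\alpha_3\mapsto a_3$, $\alpha_4\mapsto\tau a_4$, $\alpha_5\mapsto\tau a_3$, $\alpha_6\mapsto\tau a_2$, $\alpha_7\mapsto\tau a_1$, $\alpha_8\mapsto a_4$; for $D_6\to H_3$: $\alpha_1\mapsto a_1$, $\alpha_2\mapsto a_2$, $\alpha_3\mapsto\tau a_3$, $\alpha_4\mapsto\tau a_2$, $\alpha_5\mapsto\tau a_1$, $\alpha_6\mapsto a_3$; for $A_4\to H_2$: $\alpha_1\mapsto a_1$, $\alpha_2\mapsto\tau a_2$, $\alpha_3\mapsto\tau a_1$, $\alpha_4\mapsto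 a_2$. The projection $\pi_\perp$ is defined by the same formulas with $\tau$ replaced by $\sigma$ and each $a_i$ replaced by $\bar a_i$. *)

(* Defs.v *)
From HB Require Import structures.
From mathcomp Require Import all_boot all_order all_algebra.
Set Implicit Arguments. Unset Strict Implicit. Unset Printing Implicit Defensive.
Import Order.TTheory GRing.Theory Num.Theory.
Local Open Scope ring_scope.

Section Defs.
Variable R : rcfType.

Definition tau : R := (1 + Num.sqrt 5) / 2.
Definition sigma : R := (1 - Num.sqrt 5) / 2.

Definition dot m (u v : 'rV[R]_m) : R := (u *m v^T) 0 0.

Definition inQtau (x : R) : Prop := exists p q : rat, x = ratr p + ratr q * tau.
Definition inZtau (x : R) : Prop := exists p q : int, x = p%:~R + q%:~R * tau.

Definition galconj (x y : R) : Prop :=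
  exists p q : rat, x = ratr p + ratr q * tau /\ y = ratr p + ratr q * sigma.

(* Gram matrix of simple roots of H_m (m = 2,3,4), chain diagram, indices
   0..m-1 standing for 1..m; the last link carries -t/2, the others -1/2.
   With t = tau: standard representation; with t = sigma: non-standard. *)
Definition gramH m (t : R) (i j : 'I_m) : R :=
  if i == j then 1
  else if (i.+1 == j) || (j.+1 == i) then
         (if maxn i j == m.-1 then - t / 2 else - (1 / 2))
       else 0.

Definition hasGram m (t : R) (a : 'I_m -> 'rV[R]_m) : Prop :=
  forall i j, dot (a i) (a j) = gramH t i j.

Definition aat m (a : 'I_m -> 'rV[R]_m) (k : nat) : 'rV[R]_m :=
  if insub k is Some i then a i else 0.

(* Data for alpha_0 and the projection: one triple per simple root alpha_k
   (k = 1..n, in order): (c_k, idx_k, s_k) where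
     -alpha_0 = sum_k c_k alpha_k   and   pi(alpha_k) = (t if s_k else 1) * a_(idx_k).
   proj t a data = pi(alpha_0). *)
Definition proj m (t : R) (a : 'I_m -> 'rV[R]_m) (data : seq (rat * nat * bool))
  : 'rV[R]_m :=
  - \sum_(d <- data) ((ratr d.1.1 * (if d.2 then t else 1)) *: aat a d.1.2).

Definition ext m (a0 : 'rV[R]_m) (a : 'I_m -> 'rV[R]_m) (i : 'I_m.+1) : 'rV[R]_m :=
  if unlift ord0 i is Some j then a j else a0.

Definition cartanHat m (a0 : 'rV[R]_m) (a : 'I_m -> 'rV[R]_m) : 'M[R]_m.+1 :=
  \matrix_(i, j) (2 * dot (ext a0 a i) (ext a0 a j) / dot (ext a0 a i) (ext a0 a i)).

Definition affine_ext_ok m (integral : bool) (data : seq (rat * nat * bool)) : Prop :=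
  forall a abar : 'I_m -> 'rV[R]_m,
    hasGram tau a -> hasGram sigma abar ->
    let a0 := proj tau a data in
    let ab0 := proj sigma abar data in
    let A := cartanHat a0 a in
    let Ab := cartanHat ab0 abar in
    [/\ a0 != 0, forall i, A i i = 2,
        (forall i j, i != j ->
          [/\ inQtau (A i j), A i j <= 0 & (integral -> inZtau (A i j))]),
        (forall i j, A i j = 0 <-> A j i = 0)
      & \det A = 0] /\
    [/\ exists c cb : 'I_m -> R,
          [/\ a0 = \sum_i c i *: a i, ab0 = \sum_i cb i *: abar i
            & forall i, galconj (c i) (cb i)]
      & forall i j, galconj (A i j) (Ab i j)].


End Defs.

Local Open Scope ring_scope.
(* E8^= -> H4: alpha_k |-> a1,a2,a3,tau a4,tau a3,tau a2,tau a1,a4 ;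
   -alpha_0 = 2a1+3a2+4a3+5a4+6a5+4a6+2a7+3a8 *)
Definition dataE8eq : seq (rat * nat * bool) :=
  [:: (2%:Q, 0%N, false); (3%:Q, 1%N, false); (4%:Q, 2%N, false); (5%:Q, 3%N, true);
      (6%:Q, 2%N, true); (4%:Q, 1%N, true); (2%:Q, 0%N, true); (3%:Q, 3%N, false)].
(* D6 -> H3: alpha_k |-> a1,a2,tau a3,tau a2,tau a1,a3 *)
Definition dataD6 (c : seq rat) : seq (rat * nat * bool) :=
  zip (zip c [:: 0; 1; 2; 1; 0; 2]%N) [:: false; false; true; true; true; false].
Definition dataD6eq := dataD6 ([:: 1; 2; 2; 2; 1; 1] : seq rat).
Definition dataD6lt := dataD6 ([:: 1; 1; 1; 1; 1 / 2; 1 / 2] : seq rat).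
Definition dataD6gt := dataD6 ([:: 2; 2; 2; 2; 1; 1] : seq rat).
(* A4 -> H2: alpha_k |-> a1,tau a2,tau a1,a2 ; -alpha_0 = a1+a2+a3+a4 *)
Definition dataA4eq : seq (rat * nat * bool) :=
  [:: (1%:Q, 0%N, false); (1%:Q, 1%N, true); (1%:Q, 0%N, true); (1%:Q, 1%N, false)].

(* Main.v *)
Require Import Defs.
From HB Require Import structures.
From mathcomp Require Import all_boot all_order all_algebra.
From mathcomp Require Import ring lra.
Set Implicit Arguments. Unset Strict Implicit. Unset Printing Implicit Defensive.
Import Order.TTheory GRing.Theory Num.Theory.
Local Open Scope ring_scope.

Section Gen.
Variable R : rcfType.

Lemma dotE m (u v : 'rV[R]_m) : dot u v = \sum_k u 0 k * v 0 k.
Proof. by rewrite /dot !mxE; apply: eq_bigr => k _; rewrite mxE. Qed.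

Lemma dotC m (u v : 'rV[R]_m) : dot u v = dot v u.
Proof. by rewrite !dotE; apply: eq_bigr => k _; rewrite mulrC. Qed.

Lemma dotDl m (u w v : 'rV[R]_m) : dot (u + w) v = dot u v + dot w v.
Proof. by rewrite !dotE -big_split; apply: eq_bigr => k _; rewrite mxE mulrDl. Qed.

Lemma dotZl m a (u v : 'rV[R]_m) : dot (a *: u) v = a * dot u v.
Proof. by rewrite !dotE mulr_sumr; apply: eq_bigr => k _; rewrite mxE mulrA. Qed.

Lemma dotNl m (u v : 'rV[R]_m) : dot (- u) v = - dot u v.
Proof. by rewrite -scaleN1r dotZl mulN1r. Qed.

Lemma dot0l m (v : 'rV[R]_m) : dot 0 v = 0.
Proof. by rewrite dotE big1 // => k _; rewrite mxE mul0r. Qed.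

Lemma dotDr m (u w v : 'rV[R]_m) : dot v (u + w) = dot v u + dot v w.
Proof. by rewrite ![dot v _]dotC dotDl. Qed.
Lemma dotZr m a (u v : 'rV[R]_m) : dot v (a *: u) = a * dot v u.
Proof. by rewrite ![dot v _]dotC dotZl. Qed.
Lemma dotNr m (u v : 'rV[R]_m) : dot v (- u) = - dot v u.
Proof. by rewrite ![dot v _]dotC dotNl. Qed.
Lemma dot0r m (v : 'rV[R]_m) : dot v 0 = 0.
Proof. by rewrite dotC dot0l. Qed.

Lemma dot_suml m I (r : seq I) (P : pred I) (F : I -> 'rV[R]_m) v :
  dot (\sum_(i <- r | P i) F i) v = \sum_(i <- r | P i) dot (F i) v.
Proof.
elim/big_rec2: _ => [|i y1 y2 _ <-]; first by rewrite dot0l.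
by rewrite dotDl.
Qed.

Definition gn m (t : R) (k l : nat) : R :=
  if k == l then 1
  else if (k.+1 == l) || (l.+1 == k) then
         (if maxn k l == m.-1 then - t / 2 else - (1 / 2))
       else 0.

Lemma aat_ord m (a : 'I_m -> 'rV[R]_m) (i : 'I_m) : aat a i = a i.
Proof. by rewrite /aat valK. Qed.

Lemma dot_aat m (t : R) (a : 'I_m -> 'rV[R]_m) (k l : nat) : hasGram t a -> (k < m)%N -> (l < m)%N ->
  dot (aat a k) (aat a l) = gn m t k l.
Proof.
move=> hG hk hl.
have -> : k = Ordinal hk by [].
have -> : l = Ordinal hl by [].
by rewrite !aat_ord hG.
Qed.

Definition exn m (a0 : 'rV[R]_m) (a : 'I_m -> 'rV[R]_m) (k : nat) :=
  if k is k'.+1 then aat a k' else a0.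

Lemma ext_exn m a0 a (i : 'I_m.+1) : ext a0 a i = exn a0 a i.
Proof.
rewrite /ext; case: unliftP => [j ->|->] //=.
by rewrite aat_ord.
Qed.

Lemma aat_sum m (a : 'I_m -> 'rV[R]_m) k :
  aat a k = \sum_(i < m) ((val i == k)%:R : R) *: a i.
Proof.
rewrite /aat; case: insubP => [i _ <-| hk].
  rewrite (bigD1 i) //= eqxx scale1r big1 ?addr0 // => j hj.
  by rewrite (inj_eq val_inj) (negbTE hj) scale0r.
rewrite big1 // => j _; case: eqP => [e|]; last by rewrite scale0r.
by case/negP: hk; rewrite -e ltn_ord.
Qed.

Definition coefc (t : R) (d : rat * nat * bool) : R :=
  ratr d.1.1 * (if d.2 then t else 1).

Definition cvec m (t : R) (data : seq (rat * nat * bool)) (i : 'I_m) : R :=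
  - \sum_(d <- data) coefc t d * ((val i == d.1.2)%:R).

Lemma proj_sum m (t : R) a data :
  proj t a data = \sum_(i < m) cvec t data i *: a i.
Proof.
rewrite /proj /cvec.
under eq_bigr => d _ do rewrite aat_sum scaler_sumr.
rewrite exchange_big /= -sumrN; apply: eq_bigr => i _.
rewrite scaleNr scaler_suml; congr (- _); apply: eq_bigr => d _.
by rewrite scalerA.
Qed.

Lemma det_zero m (a0 : 'rV[R]_m) a (c : 'I_m -> R) :
  a0 = \sum_i c i *: a i ->
  (forall i, dot (ext a0 a i) (ext a0 a i) != 0) -> \det (cartanHat a0 a) = 0.
Proof.
move=> ha0 hnz; apply/eqP/det0P.
pose v i : R := if unlift ord0 i is Some j then - c j else 1.
pose g i := dot (ext a0 a i) (ext a0 a i).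
exists (\row_i (v i * g i / 2)).
  apply/eqP => /matrixP /(_ 0 ord0); rewrite !mxE /v unlift_none mul1r.
  apply/eqP; rewrite mulf_neq0 // ?invr_eq0 ?pnatr_eq0 //; exact: hnz.
apply/matrixP => z j; rewrite !mxE.
have -> : \sum_i (\row_i (v i * g i / 2)) z i * cartanHat a0 a i j
   = dot (\sum_i v i *: ext a0 a i) (ext a0 a j).
  rewrite dot_suml; apply: eq_bigr => i _; rewrite !mxE dotZl.
  have := hnz i; rewrite -/(g i) => hg.
  by field.
rewrite big_ord_recl /v unlift_none scale1r.
under eq_bigr => i _ do rewrite liftK /ext liftK scaleNr.
by rewrite /ext unlift_none sumrN -ha0 subrr dot0l.
Qed.

End Gen.

Section Asm.
Variable R : rcfType.

Lemma sqrt5 : (Num.sqrt 5 : R) ^+ 2 = 5.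
Proof. by rewrite sqr_sqrtr // ler0n. Qed.

Lemma tau2 : (tau R) ^+ 2 = tau R + 1.
Proof. have := sqrt5; rewrite /tau; lra. Qed.
Lemma sigma2 : (sigma R) ^+ 2 = sigma R + 1.
Proof. have := sqrt5; rewrite /sigma; lra. Qed.
Lemma tau_bounds : 0 < tau R < 2.
Proof.
have h := sqrt5; have h0 : 0 <= Num.sqrt (5 : R) := sqrtr_ge0 _.
rewrite /tau; apply/andP; split; nra.
Qed.

Lemma divE (x y z : R) : y != 0 -> x = z * y -> x / y = z.
Proof. by move=> hy ->; rewrite mulfK. Qed.

Lemma nz_tau (t p q : R) : t ^+ 2 = t + 1 -> p * p + p * q - q * q != 0 -> p + q * t != 0.
Proof.
move=> ht hn; apply/eqP => h.
have h' : (p + q * t) * (p + q - q * t) = p * p + p * q - q * q.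
  have e : (p + q * t) * (p + q - q * t) - (p * p + p * q - q * q) = - (q * q) * (t ^+ 2 - t - 1) by ring.
  by apply/eqP; rewrite -subr_eq0 e ht; apply/eqP; ring.
by move: hn; rewrite -h' h mul0r eqxx.
Qed.

Lemma assemble m (integral : bool) data (P Q : nat -> nat -> rat) (CP CQ : nat -> rat) :
  (forall (t : R) (a : 'I_m -> 'rV[R]_m), t ^+ 2 = t + 1 -> hasGram t a -> forall k l, (k < m.+1)%N -> (l < m.+1)%N ->
     2 * dot (exn (proj t a data) a k) (exn (proj t a data) a l)
       / dot (exn (proj t a data) a k) (exn (proj t a data) a k)
     = ratr (P k l) + ratr (Q k l) * t) ->
  (forall (t : R) k, t ^+ 2 = t + 1 -> (k < m)%N ->
     - \sum_(d <- data) coefc t d * ((k == d.1.2)%:R) = ratr (CP k) + ratr (CQ k) * t) ->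
  (forall k, (k < m.+1)%N -> P k k = 2%:Q /\ Q k k = 0) ->
  (forall (x : R), 0 < x < 2 -> forall k l, (k < m.+1)%N -> (l < m.+1)%N -> k != l ->
     (ratr (P k l) + ratr (Q k l) * x = 0 /\ ratr (P l k) + ratr (Q l k) * x = 0) \/
     (ratr (P k l) + ratr (Q k l) * x < 0 /\ ratr (P l k) + ratr (Q l k) * x < 0)) ->
  (integral -> forall k l, inZtau (ratr (P k l) + ratr (Q k l) * tau R)) ->
  affine_ext_ok R m integral data.
Proof.
move=> hP hC hD hO hZ a ab ha hab a0 ab0 A Ab.
have hA t (b : 'I_m -> 'rV[R]_m) : t ^+ 2 = t + 1 -> hasGram t b -> forall i j,
    cartanHat (proj t b data) b i j = ratr (P i j) + ratr (Q i j) * t.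
  by move=> ht hb i j; rewrite mxE !ext_exn hP.
have eA i j : A i j = ratr (P i j) + ratr (Q i j) * tau R := hA _ a tau2 ha i j.
have eAb i j : Ab i j = ratr (P i j) + ratr (Q i j) * sigma R := hA _ ab sigma2 hab i j.
have hdiag i : A i i = 2.
  by rewrite eA; case: (hD i (ltn_ord i)) => -> ->; rewrite rmorph0 mul0r addr0 ratr_nat.
have hnz i : dot (ext a0 a i) (ext a0 a i) != 0.
  apply/eqP => h; have := hdiag i; rewrite /A /cartanHat mxE h mulr0 mul0r.
  by move/eqP; rewrite eq_sym pnatr_eq0.
have hb := tau_bounds.
split; first split.
- apply/eqP => h0; have := hnz ord0; by rewrite /ext unlift_none h0 dot0l eqxx.
- exact: hdiag.
- move=> i j hij; rewrite eA; split.
  + by exists (P i j), (Q i j).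
  + have hij' : (val i != val j) by rewrite (inj_eq val_inj).
    case: (hO _ hb i j (ltn_ord i) (ltn_ord j) hij') => [[-> _]|[h _]] //.
    exact: ltW.
  + by move=> hi; apply: hZ.
- move=> i j; have [<-|hij] := eqVneq i j; first by [].
  have hij' : (val i != val j) by rewrite (inj_eq val_inj).
  rewrite !eA.
  case: (hO _ hb i j (ltn_ord i) (ltn_ord j) hij') => [[-> ->]|[h1 h2]] //.
  by split => h; [move: h1; rewrite h ltxx | move: h2; rewrite h ltxx].
- exact: (det_zero (proj_sum _ _ _) hnz).
split.
- exists (cvec (tau R) data), (cvec (sigma R) data); split; try exact: proj_sum.
  move=> i; exists (CP i), (CQ i); by rewrite /cvec (hC _ _ tau2 (ltn_ord i)) (hC _ _ sigma2 (ltn_ord i)).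
- by move=> i j; exists (P i j), (Q i j); rewrite eA eAb.
Qed.

End Asm.

Ltac enum_nat :=
  let k := fresh "k" in
  case=> [|k]; [move=> _ | rewrite ltnS; move: k; first [ by move=> ?; rewrite ltn0 | enum_nat ] ].

Ltac dot_expand :=
  rewrite ?(dotNl, dotNr, dotDl, dotDr, dotZl, dotZr, dot0l, dot0r).

Definition GPE8 (k l : nat) : rat :=
  match k, l with
  | 0, 0 => (1)%:Q
  | 0, 1 => ((-1)%:Q / (2)%:Q)
  | 1, 0 => ((-1)%:Q / (2)%:Q)
  | 1, 1 => (1)%:Q
  | 1, 2 => ((-1)%:Q / (2)%:Q)
  | 2, 1 => ((-1)%:Q / (2)%:Q)
  | 2, 2 => (1)%:Q
  | 2, 3 => ((-1)%:Q / (2)%:Q)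
  | 3, 2 => ((-1)%:Q / (2)%:Q)
  | 3, 3 => (1)%:Q
  | 4, 4 => (1)%:Q
  | _, _ => 0
  end.
Definition GQE8 (k l : nat) : rat :=
  match k, l with
  | 0, 0 => (1)%:Q
  | 3, 4 => ((-1)%:Q / (2)%:Q)
  | 4, 3 => ((-1)%:Q / (2)%:Q)
  | _, _ => 0
  end.
Definition PZE8 (k l : nat) : int :=
  match k, l with
  | 0, 0 => (2)
  | 0, 1 => (-2)
  | 1, 0 => (-1)
  | 1, 1 => (2)
  | 1, 2 => (-1)
  | 2, 1 => (-1)
  | 2, 2 => (2)
  | 2, 3 => (-1)
  | 3, 2 => (-1)
  | 3, 3 => (2)
  | 4, 4 => (2)
  | _, _ => 0
  end.
Definition QZE8 (k l : nat) : int :=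
  match k, l with
  | 0, 1 => (1)
  | 3, 4 => (-1)
  | 4, 3 => (-1)
  | _, _ => 0
  end.
Definition PE8 (k l : nat) : rat := (PZE8 k l)%:~R.
Definition QE8 (k l : nat) : rat := (QZE8 k l)%:~R.
Definition CPE8 (k : nat) : rat :=
  match k with
  | 0 => (-2)%:Q
  | 1 => (-3)%:Q
  | 2 => (-4)%:Q
  | 3 => (-3)%:Q
  | _ => 0
  end.
Definition CQE8 (k : nat) : rat :=
  match k with
  | 0 => (-2)%:Q
  | 1 => (-4)%:Q
  | 2 => (-6)%:Q
  | 3 => (-5)%:Q
  | _ => 0
  end.
Definition GPD6eq (k l : nat) : rat :=
  match k, l with
  | 0, 0 => (1)%:Q
  | 0, 2 => ((-1)%:Q / (2)%:Q)
  | 1, 1 => (1)%:Q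
  | 1, 2 => ((-1)%:Q / (2)%:Q)
  | 2, 0 => ((-1)%:Q / (2)%:Q)
  | 2, 1 => ((-1)%:Q / (2)%:Q)
  | 2, 2 => (1)%:Q
  | 3, 3 => (1)%:Q
  | _, _ => 0
  end.
Definition GQD6eq (k l : nat) : rat :=
  match k, l with
  | 0, 0 => (1)%:Q
  | 2, 3 => ((-1)%:Q / (2)%:Q)
  | 3, 2 => ((-1)%:Q / (2)%:Q)
  | _, _ => 0
  end.
Definition PZD6eq (k l : nat) : int :=
  match k, l with
  | 0, 0 => (2)
  | 0, 2 => (-2)
  | 1, 1 => (2)
  | 1, 2 => (-1)
  | 2, 0 => (-1)
  | 2, 1 => (-1)
  | 2, 2 => (2)
  | 3, 3 => (2)
  | _, _ => 0
  end.
Definition QZD6eq (k l : nat) : int :=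
  match k, l with
  | 0, 2 => (1)
  | 2, 3 => (-1)
  | 3, 2 => (-1)
  | _, _ => 0
  end.
Definition PD6eq (k l : nat) : rat := (PZD6eq k l)%:~R.
Definition QD6eq (k l : nat) : rat := (QZD6eq k l)%:~R.
Definition CPD6eq (k : nat) : rat :=
  match k with
  | 0 => (-1)%:Q
  | 1 => (-2)%:Q
  | 2 => (-1)%:Q
  | _ => 0
  end.
Definition CQD6eq (k : nat) : rat :=
  match k with
  | 0 => (-1)%:Q
  | 1 => (-2)%:Q
  | 2 => (-2)%:Q
  | _ => 0
  end.
Definition GPD6lt (k l : nat) : rat :=
  match k, l with
  | 0, 0 => ((1)%:Q / (2)%:Q)
  | 0, 1 => ((-1)%:Q / (2)%:Q)
  | 1, 0 => ((-1)%:Q / (2)%:Q)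
  | 1, 1 => (1)%:Q
  | 1, 2 => ((-1)%:Q / (2)%:Q)
  | 2, 1 => ((-1)%:Q / (2)%:Q)
  | 2, 2 => (1)%:Q
  | 3, 3 => (1)%:Q
  | _, _ => 0
  end.
Definition GQD6lt (k l : nat) : rat :=
  match k, l with
  | 0, 0 => ((1)%:Q / (4)%:Q)
  | 2, 3 => ((-1)%:Q / (2)%:Q)
  | 3, 2 => ((-1)%:Q / (2)%:Q)
  | _, _ => 0
  end.
Definition PD6lt (k l : nat) : rat :=
  match k, l with
  | 0, 0 => (2)%:Q
  | 0, 1 => ((-12)%:Q / (5)%:Q)
  | 1, 0 => (-1)%:Q
  | 1, 1 => (2)%:Q
  | 1, 2 => (-1)%:Q
  | 2, 1 => (-1)%:Q
  | 2, 2 => (2)%:Q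
  | 3, 3 => (2)%:Q
  | _, _ => 0
  end.
Definition QD6lt (k l : nat) : rat :=
  match k, l with
  | 0, 1 => ((4)%:Q / (5)%:Q)
  | 2, 3 => (-1)%:Q
  | 3, 2 => (-1)%:Q
  | _, _ => 0
  end.
Definition CPD6lt (k : nat) : rat :=
  match k with
  | 0 => (-1)%:Q
  | 1 => (-1)%:Q
  | 2 => ((-1)%:Q / (2)%:Q)
  | _ => 0
  end.
Definition CQD6lt (k : nat) : rat :=
  match k with
  | 0 => ((-1)%:Q / (2)%:Q)
  | 1 => (-1)%:Q
  | 2 => (-1)%:Q
  | _ => 0
  end.
Definition GPD6gt (k l : nat) : rat :=
  match k, l with
  | 0, 0 => (2)%:Q
  | 0, 1 => (-1)%:Q
  | 1, 0 => (-1)%:Q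
  | 1, 1 => (1)%:Q
  | 1, 2 => ((-1)%:Q / (2)%:Q)
  | 2, 1 => ((-1)%:Q / (2)%:Q)
  | 2, 2 => (1)%:Q
  | 3, 3 => (1)%:Q
  | _, _ => 0
  end.
Definition GQD6gt (k l : nat) : rat :=
  match k, l with
  | 0, 0 => (1)%:Q
  | 2, 3 => ((-1)%:Q / (2)%:Q)
  | 3, 2 => ((-1)%:Q / (2)%:Q)
  | _, _ => 0
  end.
Definition PD6gt (k l : nat) : rat :=
  match k, l with
  | 0, 0 => (2)%:Q
  | 0, 1 => ((-6)%:Q / (5)%:Q)
  | 1, 0 => (-2)%:Q
  | 1, 1 => (2)%:Q
  | 1, 2 => (-1)%:Q
  | 2, 1 => (-1)%:Q
  | 2, 2 => (2)%:Q
  | 3, 3 => (2)%:Q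
  | _, _ => 0
  end.
Definition QD6gt (k l : nat) : rat :=
  match k, l with
  | 0, 1 => ((2)%:Q / (5)%:Q)
  | 2, 3 => (-1)%:Q
  | 3, 2 => (-1)%:Q
  | _, _ => 0
  end.
Definition CPD6gt (k : nat) : rat :=
  match k with
  | 0 => (-2)%:Q
  | 1 => (-2)%:Q
  | 2 => (-1)%:Q
  | _ => 0
  end.
Definition CQD6gt (k : nat) : rat :=
  match k with
  | 0 => (-1)%:Q
  | 1 => (-2)%:Q
  | 2 => (-2)%:Q
  | _ => 0
  end.
Definition GPA4 (k l : nat) : rat :=
  match k, l with
  | 0, 0 => (1)%:Q
  | 0, 1 => ((-1)%:Q / (2)%:Q)
  | 0, 2 => ((-1)%:Q / (2)%:Q)
  | 1, 0 => ((-1)%:Q / (2)%:Q)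
  | 1, 1 => (1)%:Q
  | 2, 0 => ((-1)%:Q / (2)%:Q)
  | 2, 2 => (1)%:Q
  | _, _ => 0
  end.
Definition GQA4 (k l : nat) : rat :=
  match k, l with
  | 0, 0 => (1)%:Q
  | 1, 2 => ((-1)%:Q / (2)%:Q)
  | 2, 1 => ((-1)%:Q / (2)%:Q)
  | _, _ => 0
  end.
Definition PZA4 (k l : nat) : int :=
  match k, l with
  | 0, 0 => (2)
  | 0, 1 => (-2)
  | 0, 2 => (-2)
  | 1, 0 => (-1)
  | 1, 1 => (2)
  | 2, 0 => (-1)
  | 2, 2 => (2)
  | _, _ => 0
  end.
Definition QZA4 (k l : nat) : int :=
  match k, l with
  | 0, 1 => (1)
  | 0, 2 => (1)
  | 1, 2 => (-1)
  | 2, 1 => (-1)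
  | _, _ => 0
  end.
Definition PA4 (k l : nat) : rat := (PZA4 k l)%:~R.
Definition QA4 (k l : nat) : rat := (QZA4 k l)%:~R.
Definition CPA4 (k : nat) : rat :=
  match k with
  | 0 => (-1)%:Q
  | 1 => (-1)%:Q
  | _ => 0
  end.
Definition CQA4 (k : nat) : rat :=
  match k with
  | 0 => (-1)%:Q
  | 1 => (-1)%:Q
  | _ => 0
  end.

Section C.
Variable R : rcfType.

Lemma E8ok : affine_ext_ok R 4 true dataE8eq.
Proof.
apply: (assemble (P:=PE8) (Q:=QE8) (CP:=CPE8) (CQ:=CQE8)).
- move=> t a ht hG.
  have h3 : t ^+ 3 = 2 * t + 1 by rewrite exprS ht; lra.
  have h4 : t ^+ 4 = 3 * t + 2 by rewrite exprS h3; lra.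
  have hg : forall k, (k < 5)%N -> forall l, (l < 5)%N ->
      dot (exn (proj t a dataE8eq) a k) (exn (proj t a dataE8eq) a l)
      = ratr (GPE8 k l) + ratr (GQE8 k l) * t.
    enum_nat; enum_nat;
    rewrite /exn /proj /dataE8eq /= ?big_cons ?big_nil /coefc /=; dot_expand;
    rewrite ?(dot_aat hG) // /gn /GPE8 /GQE8 /=; lra.
  move=> k l hk hl; move: k hk l hl; enum_nat; enum_nat;
  rewrite !hg //; (apply: divE; [apply: (nz_tau ht); rewrite /GPE8 /GQE8 /=; apply/eqP; lra
                                 | rewrite /GPE8 /GQE8 /PE8 /QE8 /PZE8 /QZE8 /=; lra]).
- move=> t k ht hk; move: k hk; enum_nat;
  rewrite /dataE8eq /= ?big_cons ?big_nil /coefc /CPE8 /CQE8 /=; lra.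
- by enum_nat.
- move=> x /andP [hx1 hx2] k l hk hl; move: k hk l hl; enum_nat; enum_nat;
  rewrite /PE8 /QE8 /PZE8 /QZE8 /= => // _;
  first [ left; split; lra | right; split; lra ].
- by move=> _ k l; exists (PZE8 k l), (QZE8 k l); rewrite /PE8 /QE8 !ratr_int.
Qed.

Lemma D6eqok : affine_ext_ok R 3 true dataD6eq.
Proof.
apply: (assemble (P:=PD6eq) (Q:=QD6eq) (CP:=CPD6eq) (CQ:=CQD6eq)).
- move=> t a ht hG.
  have h3 : t ^+ 3 = 2 * t + 1 by rewrite exprS ht; lra.
  have h4 : t ^+ 4 = 3 * t + 2 by rewrite exprS h3; lra.
  have hg : forall k, (k < 4)%N -> forall l, (l < 4)%N ->
      dot (exn (proj t a dataD6eq) a k) (exn (proj t a dataD6eq) a l)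
      = ratr (GPD6eq k l) + ratr (GQD6eq k l) * t.
    enum_nat; enum_nat;
    rewrite /exn /proj /dataD6eq /dataD6 /= ?big_cons ?big_nil /coefc /=; dot_expand;
    rewrite ?(dot_aat hG) // /gn /GPD6eq /GQD6eq /=; lra.
  move=> k l hk hl; move: k hk l hl; enum_nat; enum_nat;
  rewrite !hg //; (apply: divE; [apply: (nz_tau ht); rewrite /GPD6eq /GQD6eq /=; apply/eqP; lra
                                 | rewrite /GPD6eq /GQD6eq /PD6eq /QD6eq /PZD6eq /QZD6eq /=; lra]).
- move=> t k ht hk; move: k hk; enum_nat;
  rewrite /dataD6eq /dataD6 /= ?big_cons ?big_nil /coefc /CPD6eq /CQD6eq /=; lra.
- by enum_nat.
- move=> x /andP [hx1 hx2] k l hk hl; move: k hk l hl; enum_nat; enum_nat;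
  rewrite /PD6eq /QD6eq /PZD6eq /QZD6eq /= => // _;
  first [ left; split; lra | right; split; lra ].
- by move=> _ k l; exists (PZD6eq k l), (QZD6eq k l); rewrite /PD6eq /QD6eq !ratr_int.
Qed.

Lemma D6ltok : affine_ext_ok R 3 false dataD6lt.
Proof.
apply: (assemble (P:=PD6lt) (Q:=QD6lt) (CP:=CPD6lt) (CQ:=CQD6lt)).
- move=> t a ht hG.
  have h3 : t ^+ 3 = 2 * t + 1 by rewrite exprS ht; lra.
  have h4 : t ^+ 4 = 3 * t + 2 by rewrite exprS h3; lra.
  have hg : forall k, (k < 4)%N -> forall l, (l < 4)%N ->
      dot (exn (proj t a dataD6lt) a k) (exn (proj t a dataD6lt) a l)
      = ratr (GPD6lt k l) + ratr (GQD6lt k l) * t.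
    enum_nat; enum_nat;
    rewrite /exn /proj /dataD6lt /dataD6 /= ?big_cons ?big_nil /coefc /=; dot_expand;
    rewrite ?(dot_aat hG) // /gn /GPD6lt /GQD6lt /=; lra.
  move=> k l hk hl; move: k hk l hl; enum_nat; enum_nat;
  rewrite !hg //; (apply: divE; [apply: (nz_tau ht); rewrite /GPD6lt /GQD6lt /=; apply/eqP; lra
                                 | rewrite /GPD6lt /GQD6lt /PD6lt /QD6lt /=; lra]).
- move=> t k ht hk; move: k hk; enum_nat;
  rewrite /dataD6lt /dataD6 /= ?big_cons ?big_nil /coefc /CPD6lt /CQD6lt /=; lra.
- by enum_nat.
- move=> x /andP [hx1 hx2] k l hk hl; move: k hk l hl; enum_nat; enum_nat;
  rewrite /PD6lt /QD6lt /= => // _;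
  first [ left; split; lra | right; split; lra ].
- by [].
Qed.

Lemma D6gtok : affine_ext_ok R 3 false dataD6gt.
Proof.
apply: (assemble (P:=PD6gt) (Q:=QD6gt) (CP:=CPD6gt) (CQ:=CQD6gt)).
- move=> t a ht hG.
  have h3 : t ^+ 3 = 2 * t + 1 by rewrite exprS ht; lra.
  have h4 : t ^+ 4 = 3 * t + 2 by rewrite exprS h3; lra.
  have hg : forall k, (k < 4)%N -> forall l, (l < 4)%N ->
      dot (exn (proj t a dataD6gt) a k) (exn (proj t a dataD6gt) a l)
      = ratr (GPD6gt k l) + ratr (GQD6gt k l) * t.
    enum_nat; enum_nat;
    rewrite /exn /proj /dataD6gt /dataD6 /= ?big_cons ?big_nil /coefc /=; dot_expand;
    rewrite ?(dot_aat hG) // /gn /GPD6gt /GQD6gt /=; lra.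
  move=> k l hk hl; move: k hk l hl; enum_nat; enum_nat;
  rewrite !hg //; (apply: divE; [apply: (nz_tau ht); rewrite /GPD6gt /GQD6gt /=; apply/eqP; lra
                                 | rewrite /GPD6gt /GQD6gt /PD6gt /QD6gt /=; lra]).
- move=> t k ht hk; move: k hk; enum_nat;
  rewrite /dataD6gt /dataD6 /= ?big_cons ?big_nil /coefc /CPD6gt /CQD6gt /=; lra.
- by enum_nat.
- move=> x /andP [hx1 hx2] k l hk hl; move: k hk l hl; enum_nat; enum_nat;
  rewrite /PD6gt /QD6gt /= => // _;
  first [ left; split; lra | right; split; lra ].
- by [].
Qed.

Lemma A4ok : affine_ext_ok R 2 true dataA4eq.
Proof.
apply: (assemble (P:=PA4) (Q:=QA4) (CP:=CPA4) (CQ:=CQA4)).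
- move=> t a ht hG.
  have h3 : t ^+ 3 = 2 * t + 1 by rewrite exprS ht; lra.
  have h4 : t ^+ 4 = 3 * t + 2 by rewrite exprS h3; lra.
  have hg : forall k, (k < 3)%N -> forall l, (l < 3)%N ->
      dot (exn (proj t a dataA4eq) a k) (exn (proj t a dataA4eq) a l)
      = ratr (GPA4 k l) + ratr (GQA4 k l) * t.
    enum_nat; enum_nat;
    rewrite /exn /proj /dataA4eq /= ?big_cons ?big_nil /coefc /=; dot_expand;
    rewrite ?(dot_aat hG) // /gn /GPA4 /GQA4 /=; lra.
  move=> k l hk hl; move: k hk l hl; enum_nat; enum_nat;
  rewrite !hg //; (apply: divE; [apply: (nz_tau ht); rewrite /GPA4 /GQA4 /=; apply/eqP; lra
                                 | rewrite /GPA4 /GQA4 /PA4 /QA4 /PZA4 /QZA4 /=; lra]).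
- move=> t k ht hk; move: k hk; enum_nat;
  rewrite /dataA4eq /= ?big_cons ?big_nil /coefc /CPA4 /CQA4 /=; lra.
- by enum_nat.
- move=> x /andP [hx1 hx2] k l hk hl; move: k hk l hl; enum_nat; enum_nat;
  rewrite /PA4 /QA4 /PZA4 /QZA4 /= => // _;
  first [ left; split; lra | right; split; lra ].
- by move=> _ k l; exists (PZA4 k l), (QZA4 k l); rewrite /PA4 /QA4 !ratr_int.
Qed.
End C.


Theorem mainTheorem1 (R : rcfType) :
  [/\ affine_ext_ok R 4 true dataE8eq,
      affine_ext_ok R 3 true dataD6eq,
      affine_ext_ok R 3 false dataD6lt,
      affine_ext_ok R 3 false dataD6gt
    & affine_ext_ok R 2 true dataA4eq].
Proof.
split; [exact: E8ok | exact: D6eqok | exact: D6ltok | exact: D6gtok | exact: A4ok].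
Qed.
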